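(* Let $G$ be an abelian Hausdorff topological group, $A\subseteq G\setminus\{0\}$, and let $K_A:S_A\to G$ be the associated Kalton map. (i) If $A$ is topologically independent in $G$, then $K_A$ is an open map onto $\langle A\rangle$ (i.e. $K_A:S_A\to\langle A\rangle$ is open, where $\langle A\rangle$ carries the subspace topology). (ii) If $K_A$ is a topologically isomorphic embedding, then $A$ is topologically independent in $G$.
   Context: For $a\in G$, $\langle a\rangle$ is the cyclic subgroup generated by $a$ with the subspace topology, and $\langle A\rangle$ is the subgroup generated by $A$. $S_A=\bigoplus_{a\in A}\langle a\rangle$ is the subgroup of finitely supported elements of $\prod_{a\in A}\langle a\rangle$, with the subspace topology of the Tychonoff product topology. The Kalton map $K_A:S_A\to G$ is the unique homomorphism extending each inclusion $\langle a\rangle\to G$. $A$ is topologically independent if $0\notin A$ and for every neighbourhood $W$ of $0$ there is a neighbourhood $U$ of $0$ such that for every finite $F\subseteq A$ and all integers $\{z_a:a\in F\}$, $\sum_{a\in F}z_aa\in U$ implies $z_aa\in W$ for all $a\in F$. *)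

(* Defs.v *)
From HB Require Import structures.
From mathcomp Require Import all_boot all_order all_algebra.
From mathcomp Require Import all_classical all_reals all_analysis.
Set Implicit Arguments. Unset Strict Implicit. Unset Printing Implicit Defensive.
Import Order.TTheory GRing.Theory Num.Theory.
Local Open Scope classical_set_scope.
Local Open Scope ring_scope.

Section Kalton.
Variable G : topologicalZmodType.

Definition cyclic_sub (a : G) : set G := [set a *~ n | n in [set: int]].

Definition gen_sub (A : set G) : set G :=
  [set x | exists (s : seq G) (z : G -> int),
      (forall a, a \in s -> A a) /\ x = \sum_(a <- s) a *~ z a].

(* S_A = bigoplus_{a in A} <a>, realised inside the Tychonoff product
   {ptws G -> G} (coordinates indexed by G, forced to be 0 off A) *)
Definition S_sub (A : set G) : set {ptws G -> G} :=
  [set f | (forall a, A a -> cyclic_sub a (f a)) /\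
           (forall a, ~ A a -> f a = 0) /\
           finite_set [set a | f a != 0]].

Definition Kalton (A : set G) (f : {ptws G -> G}) : G := \sum_(a \in A) f a.

Definition top_indep (A : set G) : Prop :=
  ~ A 0 /\
  forall W : set G, nbhs (0 : G) W ->
    exists U : set G, nbhs (0 : G) U /\
      forall (F : seq G) (z : G -> int),
        uniq F -> (forall a, a \in F -> A a) ->
        U (\sum_(a <- F) a *~ z a) ->
        forall a, a \in F -> W (a *~ z a).
End Kalton.

Definition sub_open_map (X Y : topologicalType) (D : set X) (E : set Y)
    (f : X -> Y) : Prop :=
  forall O : set X, open O ->
    exists O' : set Y, open O' /\ f @` (D `&` O) = E `&` O'.

Definition sub_continuous (X Y : topologicalType) (D : set X) (f : X -> Y) : Prop :=
  forall O' : set Y, open O' ->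
    exists O : set X, open O /\ D `&` f @^-1` O' = D `&` O.

Definition top_iso_embedding (X Y : topologicalType) (D : set X) (f : X -> Y) : Prop :=
  {in D &, injective f} /\ sub_continuous D f /\ sub_open_map D (f @` D) f.

(* Main.v *)
Require Import Defs.
From HB Require Import structures.
From mathcomp Require Import all_boot all_order all_algebra.
From mathcomp Require Import all_classical all_reals all_analysis.
Import Order.TTheory GRing.Theory Num.Theory.
Local Open Scope classical_set_scope.
Local Open Scope ring_scope.
Set Implicit Arguments. Unset Strict Implicit. Unset Printing Implicit Defensive.

Section Alg.
Variable G : topologicalZmodType.
Variable A : set G.

Definition mk (F : seq G) (z : G -> int) : {ptws G -> G} :=
  fun x => if x \in F then x *~ z x else 0.

Lemma KE (f : {ptws G -> G}) (r : seq G) :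
  uniq r -> (forall a, a \in r -> A a) ->
  (forall a, A a -> a \notin r -> f a = 0) ->
  Kalton A f = \sum_(a <- r) f a.
Proof.
move=> ur rA f0; rewrite /Kalton (fsbigE r) //.
  rewrite big_seq_cond [RHS]big_seq; apply: eq_bigl => i.
  case: (boolP (i \in r)) => //= ir; apply/mem_set/rA => //.

Qed.

Lemma S_supp (f : {ptws G -> G}) : S_sub A f ->
  exists r : seq G, [/\ uniq r, (forall a, a \in r -> A a) &
     (forall a, A a -> a \notin r -> f a = 0)].
Proof.
move=> [fc [f0 ffin]].
have fin : finite_set (A `&` f @^-1` [set~ 0]).
  by apply: sub_finite_set ffin => x [_ /= /eqP].
exists (finite_support 0 A f); split.
- exact: finite_support_uniq.
- by move=> a; rewrite in_finite_support // => /set_mem [].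
- move=> a Aa; rewrite in_finite_support // => H; apply/eqP.
  apply: contraNT H => fa; apply: mem_set; split => //=; exact/eqP.
Qed.

Lemma S_cyc (f : {ptws G -> G}) : S_sub A f ->
  exists z : G -> int, forall a, f a = a *~ z a.
Proof.
move=> [fc [f0 _]].
have : forall a, exists n : int, f a = a *~ n.
  move=> a; case: (pselect (A a)) => Aa.
    by have [n _ <-] := fc a Aa; exists n.
  by exists 0; rewrite f0.
by move/choice => [z hz]; exists z.
Qed.

Lemma mk_S F z : uniq F -> (forall a, a \in F -> A a) -> S_sub A (mk F z).
Proof.
move=> uF FA; split; [|split].
- move=> a _; rewrite /mk; case: ifP => _.
    by exists (z a).
  by exists 0 => //; rewrite mulr0z.
- move=> a nAa; rewrite /mk; case: ifP => // aF.
  by exfalso; apply: nAa; apply: FA.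
- apply: (@sub_finite_set _ _ [set` F]); last exact: finite_seq.
  move=> x /=; rewrite /mk; case: ifP => //; by rewrite eqxx.
Qed.

Lemma mk_K F z : uniq F -> (forall a, a \in F -> A a) ->
  Kalton A (mk F z) = \sum_(a <- F) a *~ z a.
Proof.
move=> uF FA; rewrite (@KE (mk F z) F uF FA).
  by apply: eq_big_seq => a aF; rewrite /mk aF.
by move=> a _ aF; rewrite /mk (negbTE aF).
Qed.


Lemma common_supp (f g : {ptws G -> G}) : S_sub A f -> S_sub A g ->
  exists r : seq G, [/\ uniq r, (forall a, a \in r -> A a),
     (forall a, A a -> a \notin r -> f a = 0) &
     (forall a, A a -> a \notin r -> g a = 0)].
Proof.
move=> /S_supp [r1 [u1 A1 z1]] /S_supp [r2 [u2 A2 z2]].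
exists (undup (r1 ++ r2)); split.
- exact: undup_uniq.
- by move=> a; rewrite mem_undup mem_cat => /orP[/A1|/A2].
- move=> a Aa; rewrite mem_undup mem_cat negb_or => /andP[h _]; exact: z1.
- move=> a Aa; rewrite mem_undup mem_cat negb_or => /andP[_ h]; exact: z2.
Qed.

Lemma S_subf (f g : {ptws G -> G}) : S_sub A f -> S_sub A g ->
  S_sub A ((fun a => f a - g a) : {ptws G -> G}).
Proof.
move=> Sf Sg; have [zf hf] := S_cyc Sf; have [zg hg] := S_cyc Sg.
case: Sf => _ [f0 ffin]; case: Sg => _ [g0 gfin].
split; [|split].
- move=> a _; exists (zf a - zg a) => //; by rewrite mulrzBr hf hg.
- by move=> a nA; rewrite f0 // g0 // subrr.
- apply: (@sub_finite_set _ _ ([set a | f a != 0] `|` [set a | g a != 0])).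
    move=> a /= h; have [fa|fa] := eqVneq (f a) 0; [right|by left].
    by apply/eqP => ga; move: h; rewrite fa ga subrr eqxx.
  by rewrite finite_setU.
Qed.

Lemma K_subf (f g : {ptws G -> G}) : S_sub A f -> S_sub A g ->
  Kalton A ((fun a => f a - g a) : {ptws G -> G}) = Kalton A f - Kalton A g.
Proof.
move=> Sf Sg; have [r [ur rA zf zg]] := common_supp Sf Sg.
rewrite (@KE f r ur rA zf) (@KE g r ur rA zg) (@KE _ r ur rA); last first.
  by move=> a Aa ar; rewrite zf // zg // subrr.
by rewrite sumrB.
Qed.

Definition z0 : {ptws G -> G} := fun _ => 0.

Lemma S_z0 : S_sub A z0.
Proof.
split; [|split] => //.
- by move=> a _; exists 0 => //; rewrite mulr0z.
- apply: (@sub_finite_set _ _ set0) => // a /=; by rewrite /z0 eqxx.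
Qed.

Lemma K_z0 : Kalton A z0 = 0.
Proof. by rewrite (@KE z0 [::]) // big_nil. Qed.

Lemma S_addf (f g : {ptws G -> G}) : S_sub A f -> S_sub A g ->
  S_sub A ((fun a => f a + g a) : {ptws G -> G}).
Proof.
move=> Sf Sg.
have Sg' := S_subf S_z0 Sg.
have H := S_subf Sf Sg'.
suff -> : ((fun a => f a + g a) : {ptws G -> G}) = (fun a => f a - (z0 a - g a)) by [].
by apply: funext => a; rewrite /z0 sub0r opprK.
Qed.

Lemma K_addf (f g : {ptws G -> G}) : S_sub A f -> S_sub A g ->
  Kalton A ((fun a => f a + g a) : {ptws G -> G}) = Kalton A f + Kalton A g.
Proof.
move=> Sf Sg.
have Sg' := S_subf S_z0 Sg.
have H := K_subf Sf Sg'; rewrite (K_subf S_z0 Sg) K_z0 in H.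
suff -> : ((fun a => f a + g a) : {ptws G -> G}) = (fun a => f a - (z0 a - g a)).
  by rewrite H sub0r opprK.
by apply: funext => a; rewrite /z0 sub0r opprK.
Qed.

Lemma KS_gen : Kalton A @` S_sub A = gen_sub A.
Proof.
rewrite eqEsubset; split => x.
- case=> f Sf <-; have [r [ur rA rz]] := S_supp Sf; have [z hz] := S_cyc Sf.
  exists r, z; split => //; rewrite (@KE f r ur rA rz).
  by apply: eq_bigr => a _.
- case=> s [z [sA ->]]; elim: s sA => [|a s IH] sA.
    by exists z0; [exact: S_z0| rewrite K_z0 big_nil].
  rewrite big_cons; have [f Sf <-] : (Kalton A @` S_sub A) (\sum_(b <- s) b *~ z b).
    by apply: IH => b bs; apply: sA; rewrite in_cons bs orbT.
  have aA : A a by apply: sA; rewrite mem_head.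
  have ua : uniq [:: a] by [].
  have a1 : forall b, b \in [:: a] -> A b by move=> b; rewrite mem_seq1 => /eqP->.
  exists ((fun b => mk [:: a] z b + f b) : {ptws G -> G}).
    exact: S_addf (mk_S z ua a1) Sf.
  by rewrite K_addf ?(mk_K z ua a1) ?big_seq1 //; exact: mk_S.
Qed.

End Alg.
Section T.
Variable G : topologicalZmodType.
Lemma shift0 (x : G) (V : set G) : nbhs x V -> nbhs 0 [set w | V (x + w)].
Proof.
move=> hV.
have h : (fun w : G => x + w) @ nbhs (0:G) --> x.
  rewrite -[x in _ --> x](addr0 x).
  apply: (@continuous_comp _ _ _ (fun w : G => (x, w)) (fun p : G * G => p.1 + p.2)).
    by apply: cvg_pair => /=; [exact: cvg_cst|exact: cvg_id].
  exact: add_continuous.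
exact: h.
Qed.
Lemma shiftx (x : G) (U : set G) : nbhs 0 U -> nbhs x [set y | U (y - x)].
Proof.
move=> hU.
have h : (fun y : G => y - x) @ nbhs x --> (0:G).
  rewrite -(subrr x).
  apply: (@continuous_comp _ _ _ (fun y : G => (y, x)) (fun p : G * G => p.1 - p.2)).
    by apply: cvg_pair => /=; [exact: cvg_id|exact: cvg_cst].
  exact: sub_continuous.
exact: h.
Qed.
Definition FF (f0 : {ptws G -> G}) : set_system {ptws G -> G} :=
  [set P | exists (B : seq G) (W : set G), nbhs (0:G) W /\
     forall g : {ptws G -> G}, (forall b, b \in B -> W (g b - f0 b)) -> P g].
Lemma FF_filter f0 : Filter (FF f0).
Proof.
split.
- exists [::], setT; split; first exact: filterT. by [].
- move=> P Q [B1 [W1 [h1 H1]]] [B2 [W2 [h2 H2]]].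
  exists (B1 ++ B2), (W1 `&` W2); split; first exact: filterI.
  move=> g Hg; split.
  + by apply: H1 => b bB; case: (Hg b); rewrite ?mem_cat ?bB.
  + by apply: H2 => b bB; case: (Hg b); rewrite ?mem_cat ?bB ?orbT.
- move=> P Q PQ [B [W [h H]]]; exists B, W; split => // g /H; exact: PQ.
Qed.
Lemma FF_cvg f0 : FF f0 --> f0.
Proof.
apply/cvg_sup; first exact: FF_filter.
move=> i; apply/cvg_image; first exact: FF_filter.
  rewrite eqEsubset; split => // y _; exists (fun _ => y) => //.
move=> V /= hV.
exists [set g : {ptws G -> G} | V (g i)].
  exists [:: i], [set w | V (f0 i + w)]; split.
    exact: shift0.
  move=> g /(_ i); rewrite mem_seq1 eqxx => /(_ isT).
  by rewrite /= addrC subrK.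
rewrite eqEsubset; split => y; first by case=> g ? <-.
move=> Vy; exists (fun _ => y) => //.
Qed.
Lemma T1 (f0 : {ptws G -> G}) (O : set {ptws G -> G}) : nbhs f0 O ->
  exists (B : seq G) (W : set G), nbhs (0:G) W /\
     forall g : {ptws G -> G}, (forall b, b \in B -> W (g b - f0 b)) -> O g.
Proof. move=> h; have := @FF_cvg f0; exact. Qed.
Lemma open_fin (B : seq G) (V : set G) : open V ->
  open [set h : {ptws G -> G} | forall b, b \in B -> V (h b)].
Proof.
move=> oV; elim: B => [|b B IH].
  rewrite (_ : [set h : {ptws G -> G} | _] = setT); first exact: openT.
  by rewrite eqEsubset; split.
rewrite (_ : [set h : {ptws G -> G} | _] =
   [set h : {ptws G -> G} | V (h b)] `&` [set h : {ptws G -> G} | forall b, b \in B -> V (h b)]).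
  apply: openI => //.
  have pc : continuous (fun f : {ptws G -> G} => f b).
    move=> f; exact: (@proj_continuous G (fun _ => G) b f).
  exact: ((continuousP _).1 pc V oV).
rewrite eqEsubset; split => h /=.
  move=> H; split; first by apply: H; rewrite mem_head.
  by move=> c cB; apply: H; rewrite in_cons cB orbT.
by case=> h1 h2 c; rewrite in_cons => /orP[/eqP->//|]; exact: h2.
Qed.
End T.

Theorem proposition4p7 (G : topologicalZmodType) (A : set G) :
  hausdorff_space G -> ~ A 0 ->
  (top_indep A ->
     Kalton A @` S_sub A = gen_sub A /\
     sub_open_map (S_sub A) (gen_sub A) (Kalton A)) /\
  (top_iso_embedding (S_sub A) (Kalton A) -> top_indep A).
Proof.
move=> _ nA0; split.
  move=> [_ hind]; split; first exact: KS_gen.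
  move=> O oO.
  exists [set y | exists (f0 : {ptws G -> G}) (U : set G), S_sub A f0 /\
     (forall g, S_sub A g -> U (Kalton A g) -> O (fun a => f0 a + g a)) /\
     nbhs y [set w | U (w - Kalton A f0)]].
  split.
    rewrite openE => y [f0 [U [Sf0 [PU hy]]]].
    apply: filterS (nbhs_interior hy) => w hw.
    by exists f0, U.
  rewrite -KS_gen eqEsubset; split => y.
    case=> f0 [Sf0 Of0] <-; split; first by exists f0.
    have nO : nbhs f0 O by apply: open_nbhs_nbhs; split.
    have [B [W [hW HB]]] := T1 nO.
    have [U [hU HU]] := hind W hW.
    exists f0, U; split => //; split; last exact: shiftx.
    move=> g Sg Ug; apply: HB => b bB.
    rewrite addrAC subrr add0r.
    have [r [ur rA rz]] := S_supp Sg; have [z hz] := S_cyc Sg.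
    have Ur : U (\sum_(a <- r) a *~ z a).
      by move: Ug; rewrite (@KE _ A g r ur rA rz); under eq_bigr do rewrite hz.
    have HW := HU r z ur rA Ur.
    case: (boolP (b \in r)) => br; first by rewrite hz; exact: HW.
    case: (pselect (A b)) => Ab.
      by rewrite rz //; exact: nbhs_singleton.
    by case: Sg => _ [g0 _]; rewrite g0 //; exact: nbhs_singleton.
  case=> -[h Sh <-] [f0 [U [Sf0 [PU hy]]]].
  have Uh := nbhs_singleton hy.
  have Sg := S_subf Sh Sf0.
  have := PU _ Sg; rewrite K_subf // => /(_ Uh) Oh.
  exists h => //; split => //.
  suff <- : ((fun a => f0 a + (h a - f0 a)) : {ptws G -> G}) = h by [].
  by apply: funext => a; rewrite addrC subrK.
move=> [inj [cont opn]]; split => // W hW.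
have [Q0 [oQ0 eqQ0]] := cont _ (open_interior W).
have Q0z : Q0 (@z0 G).
  have : (S_sub A `&` Kalton A @^-1` W°) (@z0 G).
    by split; [exact: S_z0|rewrite /= K_z0; exact: hW].
  by rewrite eqQ0 => -[].
have nQ0 : nbhs (@z0 G) Q0 by apply: open_nbhs_nbhs; split.
have [B [W1 [hW1 HB]]] := T1 nQ0.
have oO := open_fin B (open_interior (W `&` W1)).
have [Q' [oQ' eqQ']] := opn _ oO.
have Q'0 : Q' 0.
  have : (Kalton A @` (S_sub A `&` [set h | forall b, b \in B -> (W `&` W1)° (h b)])) 0.
    exists (@z0 G); last exact: K_z0.
    split; first exact: S_z0.
    by move=> b _; rewrite /z0; exact: (filterI hW hW1).
  by rewrite eqQ' => -[].
exists Q'; split; first by apply: open_nbhs_nbhs; split.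
move=> F z uF FA UF a aF.
have aA := FA a aF.
case: (boolP (a \in B)) => aB.
  have Sf := mk_S z uF FA.
  have : (Kalton A @` S_sub A `&` Q') (Kalton A (mk F z)).
    by split; [exists (mk F z)|rewrite mk_K].
  rewrite -eqQ' => -[g [Sg Og] Kg].
  have gf := inj g (mk F z) (mem_set Sg) (mem_set Sf) Kg.
  have := Og a aB; rewrite gf /mk aF => /interior_subset [].
  done.
have ua : uniq [:: a] by [].
have a1 : forall b, b \in [:: a] -> A b by move=> b; rewrite mem_seq1 => /eqP->.
have Sh := mk_S z ua a1.
have Oh : Q0 (mk [:: a] z).
  apply: HB => b bB; rewrite /mk /z0 mem_seq1.
  have -> : (b == a) = false.
    by apply/negbTE; apply: contraNneq aB => <-.
  rewrite subr0; exact: nbhs_singleton.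
have : (S_sub A `&` Q0) (mk [:: a] z) by [].
rewrite -eqQ0 => -[_ /=]; rewrite (mk_K z ua a1) big_seq1.
exact: interior_subset.
Qed.
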